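(* Let $A$ be a commutative $\mathbb{R}$-algebra and $A^2 \subseteq A$ the subsemiring of all sums of squares. Let $M \subseteq A$ be a quadratic module for which there is $v \in A^2$ such that for every $a \in A^2$ there is $p \in \mathbb{R}_+[X]$ with $p(v) - a \in M$. Then the following are equivalent for $a \in A$: (1) $f(a) \geq 0$ for every algebra homomorphism $f : A \to \mathbb{R}$ with $f(M) \subseteq \mathbb{R}_+$. (2) For every $r \in \mathbb{R}_+$ and $\varepsilon > 0$, there exist a polynomial $q \in \mathbb{R}_+[X]$ and an element $w \in A^2$ such that $q(r) \leq \varepsilon$ and $(1 + w)\,(a + q(v)) \in M$.
   Context: A quadratic module in $A$ is a subset $M \subseteq A$ with $1 \in M$ which is closed under addition and under multiplication by elements of $A^2$ (sums of squares). *)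

(* Defs.v *)
From HB Require Import structures.
From mathcomp Require Import all_boot all_order all_algebra.
From mathcomp Require Import reals.
Set Implicit Arguments. Unset Strict Implicit. Unset Printing Implicit Defensive.
Import Order.TTheory GRing.Theory Num.Theory.
Local Open Scope ring_scope.

Section Defs.
Variables (R : realType) (A : comAlgType R).

Definition sos (a : A) : Prop := exists s : seq A, a = \sum_(x <- s) x ^+ 2.

Definition quadratic_module (M : A -> Prop) : Prop :=
  [/\ M 1,
      (forall x y, M x -> M y -> M (x + y)) &
      (forall s m, sos s -> M m -> M (s * m))].

Definition nonneg_poly (p : {poly R}) : Prop := forall i, 0 <= p`_i.

Definition peval (p : {poly R}) (v : A) : A := horner_alg v p.

Definition alg_hom (f : A -> R) : Prop :=
  [/\ (forall x y, f (x + y) = f x + f y),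
      (forall x y, f (x * y) = f x * f y),
      f 1 = 1 &
      (forall (c : R) x, f (c *: x) = c * f x)].
End Defs.

(* Main.v *)
Require Import Defs.
From HB Require Import structures.
From mathcomp Require Import all_boot all_order all_algebra.
From mathcomp Require Import reals.
From mathcomp Require Import boolp classical_sets.
From mathcomp Require Import ring lra.
Import Order.TTheory GRing.Theory Num.Theory.
Local Open Scope ring_scope.
Set Implicit Arguments. Unset Strict Implicit.
Section Basics.
Variables (R : realType) (A : comAlgType R).
Implicit Types (x y z s : A) (Q : A -> Prop).

Lemma sos0 : sos (0 : A). Proof. by exists [::]; rewrite big_nil. Qed.
Lemma sos_sq x : sos (x ^+ 2). Proof. by exists [:: x]; rewrite big_seq1. Qed.
Lemma sos1 : sos (1 : A). Proof. by exists [:: 1]; rewrite big_seq1 expr1n. Qed.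
Lemma sosD x y : sos x -> sos y -> sos (x + y).
Proof. by move=> [s1 ->] [s2 ->]; exists (s1 ++ s2); rewrite big_cat. Qed.
Lemma sos_sqM x y : sos y -> sos (x ^+ 2 * y).
Proof.
move=> [s ->]; exists (map (fun j => x * j) s).
by rewrite big_map big_distrr; apply: eq_bigr => j _; rewrite exprMn.
Qed.
Lemma sosM x y : sos x -> sos y -> sos (x * y).
Proof.
move=> [s ->] hy; elim: s => [|j s IH]; first by rewrite big_nil mul0r; exact: sos0.
by rewrite big_cons mulrDl; apply: sosD => //; apply: sos_sqM.
Qed.
Lemma sos_alg (c : R) : 0 <= c -> sos (c%:A : A).
Proof.
move=> hc; have <- : (Num.sqrt c)%:A ^+ 2 = c%:A :> A.
  by rewrite expr2 mulr_algl scalerA -expr2 sqr_sqrtr.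
exact: sos_sq.
Qed.
Lemma sos_scale (c : R) x : 0 <= c -> sos x -> sos (c *: x).
Proof. by move=> hc hx; rewrite -mulr_algl; apply: sosM => //; apply: sos_alg. Qed.
Lemma sosX x n : sos x -> sos (x ^+ n).
Proof. by move=> hx; elim: n => [|n IH]; [rewrite expr0; exact: sos1|rewrite exprS; exact: sosM]. Qed.

Section QM.
Variable Q : A -> Prop.
Hypothesis HQ : quadratic_module Q.

Lemma qm1 : Q 1. Proof. by case: HQ. Qed.
Lemma qmD x y : Q x -> Q y -> Q (x + y). Proof. by case: HQ => _ h _; apply: h. Qed.
Lemma qmM s x : sos s -> Q x -> Q (s * x). Proof. by case: HQ => _ _ h; apply: h. Qed.
Lemma qm_sos s : sos s -> Q s.
Proof. by move=> hs; rewrite -[s]mulr1; apply: qmM => //; apply: qm1. Qed.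
Lemma qm0 : Q 0. Proof. by apply: qm_sos; exact: sos0. Qed.
Lemma qm_scale (c : R) x : 0 <= c -> Q x -> Q (c *: x).
Proof. by move=> hc hx; rewrite -mulr_algl; apply: qmM => //; apply: sos_alg. Qed.
Lemma qm_alg (c : R) : 0 <= c -> Q c%:A.
Proof. by move=> hc; apply: qm_sos; apply: sos_alg. Qed.
Lemma qm_unscale (k : R) x : 0 < k -> Q (k *: x) -> Q x.
Proof.
move=> hk hx; have -> : x = k^-1 *: (k *: x).
  by rewrite scalerA mulVf ?gt_eqF // scale1r.
by apply: qm_scale => //; rewrite invr_ge0 ltW.
Qed.
Lemma qm_unscale_nat n x : Q (n.+1%:R * x) -> Q x.
Proof.
rewrite mulr_natl -scaler_nat => h; apply: (@qm_unscale n.+1%:R x) => //.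
Qed.
Lemma qm_neg1 (c : R) : c < 0 -> Q c%:A -> Q (-1).
Proof.
move=> hc hx; have -> : (-1 : A) = (- c^-1) *: c%:A.
  by rewrite scalerA mulNr mulVf ?lt_eqF // scaleN1r.
by apply: qm_scale => //; rewrite oppr_ge0 invr_le0 ltW.
Qed.
Lemma qm_sum n (F : 'I_n -> A) : (forall i, Q (F i)) -> Q (\sum_(i < n) F i).
Proof. by move=> h; apply: big_ind => //; [apply: qm0 | apply: qmD]. Qed.
Lemma qm_prod x z (k : R) : 0 < k -> Q x -> Q z -> x + z = k%:A -> Q (x * z).
Proof.
move=> hk hx hz hs; apply: (@qm_unscale k) => //.
have -> : k *: (x * z) = x ^+ 2 * z + z ^+ 2 * x by rewrite -mulr_algl -hs; ring.
by apply: qmD; apply: qmM => //; apply: sos_sq.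
Qed.
Lemma qm_pow u n : Q u -> Q (u ^+ n).
Proof.
move=> hu; have -> : u ^+ n = (u ^+ n./2) ^+ 2 * u ^+ odd n.
  by rewrite -exprM -exprD muln2 addnC odd_double_half.
case: (odd n); rewrite ?expr1 ?expr0 ?mulr1; first by apply: qmM => //; apply: sos_sq.
by apply: qm_sos; apply: sos_sq.
Qed.
End QM.

Lemma bernoulli (h : R) n : 0 <= h -> 1 + n%:R * h <= (1 + h) ^+ n.
Proof.
move=> h0; elim: n => [|n IH]; first by rewrite mul0r addr0 expr0.
rewrite exprS -natr1.
have n0 : 0 <= n%:R :> R by [].
have X0 : 0 <= n%:R * h * h by rewrite !mulr_ge0.
nra.
Qed.

Lemma pow_small (b k : R) : 0 <= b -> b < 1 -> 0 < k -> exists n, b ^+ n <= k.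
Proof.
move=> b0 b1 k0; have [->|bn0] := eqVneq b 0.
  by exists 1%N; rewrite expr1 ltW.
have bp : 0 < b by rewrite lt_neqAle eq_sym bn0.
pose h := b^-1 - 1.
have hp : 0 < h by rewrite subr_gt0 invf_gt1.
pose n := Num.bound ((h * k)^-1).
have hn : (h * k)^-1 < n%:R by apply: archi_boundP; rewrite invr_ge0 ltW // mulr_gt0.
exists n.
have e : b = (1 + h)^-1 by rewrite /h addrC subrK invrK.
have X := @bernoulli h n (ltW hp).
rewrite e exprVn.
have Xp : 0 < (1 + h) ^+ n by rewrite exprn_gt0 // ltr_wpDr // ltW.
rewrite invf_ple ?posrE //.
rewrite invfM ltr_pdivrMl // in hn.
apply: (le_trans _ X); apply: ltW; apply: (lt_le_trans hn).
by rewrite mulrC ler_wpDl.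
Qed.
End Basics.
Section Char.
Variables (R : realType) (A : comAlgType R).
Variable P : A -> Prop.
Hypotheses (HP : quadratic_module P) (Ptot : forall x, P x \/ P (- x))
  (Pn1 : ~ P (-1)) (Parch : forall x, exists N : R, P (N%:A - x)).

Lemma Palg_ge0 (l : R) : P l%:A -> 0 <= l.
Proof. move=> h; rewrite leNgt; apply/negP => hl; exact: Pn1 (qm_neg1 HP hl h). Qed.

Definition Sx (x : A) : set R := [set l | P (x - l%:A)].
Definition chi (x : A) : R := sup (Sx x).

Lemma hasS x : has_sup (Sx x).
Proof.
split.
  have [N hN] := Parch (- x); exists (- N); rewrite /Sx /=.
  by rewrite scaleNr opprK addrC -[x in _ + x]opprK.
have [N hN] := Parch x; exists N => l hl; rewrite /Sx /= in hl.
suff : 0 <= N - l by lra.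
apply: Palg_ge0; rewrite scalerBl.
have -> : N%:A - l%:A = (N%:A - x) + (x - l%:A) :> A by rewrite addrA subrK.
exact: qmD.
Qed.

Lemma chi_lo x l : l < chi x -> P (x - l%:A).
Proof.
move=> hl; have hp : 0 < chi x - l by lra.
have [e Se le] := sup_adherent hp (hasS x).
rewrite opprB addrCA subrr addr0 in le.
have -> : x - l%:A = (x - e%:A) + (e - l)%:A by rewrite scalerBl addrA subrK.
apply: qmD => //; apply: qm_alg => //; rewrite subr_ge0 ltW //.
Qed.

Lemma chi_hi x l : chi x < l -> P (l%:A - x).
Proof.
move=> hl; case: (Ptot (x - l%:A)) => h; last by rewrite opprB in h.
have := sup_upper_bound (hasS x) h; rewrite leNgt hl //.
Qed.

Lemma chi_sep x (a b : R) : (forall l, l < a -> P (x - l%:A)) ->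
  (forall l, b < l -> P (l%:A - x)) -> a <= b.
Proof.
move=> h1 h2; rewrite leNgt; apply/negP => ba.
pose l1 := (b + b + a) / 3%:R; pose l2 := (b + a + a) / 3%:R.
have hb : b < l1 by rewrite /l1; lra.
have ha : l2 < a by rewrite /l2; lra.
have h12 : l1 - l2 < 0 by rewrite /l1 /l2; lra.
have := qmD HP (h2 _ hb) (h1 _ ha).
rewrite addrA subrK -scalerBl => /Palg_ge0; rewrite leNgt h12 //.
Qed.

Lemma chi_uniq x (a : R) : (forall l, l < a -> P (x - l%:A)) ->
  (forall l, a < l -> P (l%:A - x)) -> chi x = a.
Proof.
move=> h1 h2; apply/eqP; rewrite eq_le; apply/andP; split.
  by apply: (chi_sep (@chi_lo x)).
by apply: (chi_sep h1 (@chi_hi x)).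
Qed.

Lemma chiD x y : chi (x + y) = chi x + chi y.
Proof.
apply: chi_uniq => l hl.
  pose d := (chi x + chi y - l) / 2%:R.
  have h1 : chi x - d < chi x by rewrite /d; lra.
  have h2 : chi y - d < chi y by rewrite /d; lra.
  have H := qmD HP (chi_lo h1) (chi_lo h2).
  have -> : l = (chi x - d) + (chi y - d) by rewrite /d; lra.
  suff -> : x + y - ((chi x - d) + (chi y - d))%:A
     = (x - (chi x - d)%:A) + (y - (chi y - d)%:A) by [].
  by rewrite scalerDl; ring.
pose d := (l - chi x - chi y) / 2%:R.
have h1 : chi x < chi x + d by rewrite /d; lra.
have h2 : chi y < chi y + d by rewrite /d; lra.
have H := qmD HP (chi_hi h1) (chi_hi h2).
have -> : l = (chi x + d) + (chi y + d) by rewrite /d; lra.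
suff -> : ((chi x + d) + (chi y + d))%:A - (x + y)
   = ((chi x + d)%:A - x) + ((chi y + d)%:A - y) by [].
by rewrite scalerDl; ring.
Qed.

Lemma chiN x : chi (- x) = - chi x.
Proof.
apply: chi_uniq => l hl.
  have : chi x < - l by lra.
  by move/chi_hi => h; rewrite addrC -scaleNr.
have : - l < chi x by lra.
by move/chi_lo; rewrite scaleNr opprK => h; rewrite opprK addrC.
Qed.

Lemma chiB x y : chi (x - y) = chi x - chi y.
Proof. by rewrite chiD chiN. Qed.

Lemma chi0 : chi 0 = 0.
Proof. by have := chiN 0; rewrite oppr0 => h; lra. Qed.

Lemma chiZp (c : R) x : 0 < c -> chi (c *: x) = c * chi x.
Proof.
move=> hc; apply: chi_uniq => l hl.
  have : l / c < chi x by rewrite ltr_pdivrMr // mulrC.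
  move/chi_lo/(qm_scale HP (ltW hc)).
  by rewrite scalerBr scalerA mulrC divfK ?gt_eqF.
have : chi x < l / c by rewrite ltr_pdivlMr // mulrC.
move/chi_hi/(qm_scale HP (ltW hc)).
by rewrite scalerBr scalerA mulrC divfK ?gt_eqF.
Qed.

Lemma chiZ (c : R) x : chi (c *: x) = c * chi x.
Proof.
have [hc|hc|->] := ltgtP c 0; last by rewrite scale0r chi0 mul0r.
  have -> : c *: x = (- c) *: (- x) by rewrite scalerN scaleNr opprK.
  by rewrite chiZp ?oppr_gt0 // chiN mulrNN.
exact: chiZp.
Qed.

Lemma chi1 : chi 1 = 1.
Proof.
apply: chi_uniq => l hl.
  have -> : 1 - l%:A = (1 - l)%:A :> A by rewrite scalerBl scale1r.
  by apply: qm_alg => //; lra.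
have -> : l%:A - 1 = (l - 1)%:A :> A by rewrite scalerBl scale1r.
by apply: qm_alg => //; lra.
Qed.

Lemma chi_alg (c : R) : chi c%:A = c.
Proof. by rewrite chiZ chi1 mulr1. Qed.

Lemma chi_ge0 x : P x -> 0 <= chi x.
Proof.
move=> hx; rewrite leNgt; apply/negP => hneg.
have h1 : chi x < chi x / 2%:R by lra.
have := qmD HP (chi_hi h1) hx; rewrite subrK => /Palg_ge0; lra.
Qed.

Lemma algM (a b : R) : (a * b)%:A = a%:A * b%:A :> A.
Proof. by rewrite mulr_algl scalerA. Qed.

Lemma chi_sqr x : chi (x ^+ 2) = chi x ^+ 2.
Proof.
pose a := chi x; pose z := x - a%:A.
have cz : chi z = 0 by rewrite /z chiB chi_alg subrr.
have cz2 : chi (z ^+ 2) = 0.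
  apply: chi_uniq => l hl.
    have -> : z ^+ 2 - l%:A = z ^+ 2 + (- l)%:A by rewrite scaleNr.
    apply: (qmD HP); [apply: (qm_sos HP); apply: sos_sq | apply: (qm_alg HP); lra].
  pose e := Num.sqrt l.
  have ep : 0 < e by rewrite sqrtr_gt0.
  have h1 : P (z - (- e)%:A) by apply: chi_lo; rewrite cz; lra.
  have h2 : P (e%:A - z) by apply: chi_hi; rewrite cz.
  have := qm_prod HP (k := e + e) _ h1 h2.
  have -> : (z - (- e)%:A) * (e%:A - z) = l%:A - z ^+ 2.
    by rewrite -(sqr_sqrtr (ltW hl)) -/e expr2 algM scaleNr; ring.
  apply; first lra.
  by rewrite scalerDl scaleNr; ring.
have -> : x ^+ 2 = z ^+ 2 + (a *: z + a *: z) + (a * a)%:A.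
  have -> : a *: z = a%:A * z by rewrite mulr_algl.
  by rewrite algM /z; ring.
by rewrite !chiD cz2 !chiZ cz chi1 mulr0 mulr1 !add0r expr2.
Qed.

Lemma chiM x y : chi (x * y) = chi x * chi y.
Proof.
have -> : x * y = 4%:R^-1 *: ((x + y) ^+ 2 - (x - y) ^+ 2).
  have -> : (x + y) ^+ 2 - (x - y) ^+ 2 = 4%:R * (x * y) by ring.
  by rewrite mulr_natl -scaler_nat scalerA mulVf ?pnatr_eq0 // scale1r.
rewrite chiZ chiB !chi_sqr chiD chiB.
have -> : (chi x + chi y) ^+ 2 - (chi x - chi y) ^+ 2 = 4%:R * (chi x * chi y) by ring.
by rewrite mulrA mulVf ?pnatr_eq0 // mul1r.
Qed.

Lemma chi_hom : alg_hom chi.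
Proof. by split; [exact: chiD | exact: chiM | exact: chi1 | exact: chiZ]. Qed.

End Char.
Section Ord.
Variables (R : realType) (A : comAlgType R).

Definition ext (P : A -> Prop) (x : A) : A -> Prop :=
  fun z => exists p s, P p /\ sos s /\ z = p + s * x.

Lemma ext_qm P x : quadratic_module P -> quadratic_module (ext P x).
Proof.
move=> HP; split.
- exists 1, 0; split; [exact: (qm1 HP) | split; [exact: sos0 | by rewrite mul0r addr0]].
- move=> z1 z2 [p1 [s1 [h1 [hs1 ->]]]] [p2 [s2 [h2 [hs2 ->]]]].
  exists (p1 + p2), (s1 + s2); split; first exact: (qmD HP h1 h2).
  by split; [exact: sosD | ring].
- move=> s z hs [p [t [hp [ht ->]]]]; exists (s * p), (s * t).
  split; first exact: (qmM HP hs hp).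
  by split; [exact: sosM | ring].
Qed.

Lemma ext_sub P x : quadratic_module P -> forall z, P z -> ext P x z.
Proof. move=> HP z hz; exists z, 0; split => //; split; [exact: sos0|by rewrite mul0r addr0]. Qed.

Lemma ext_x P x : quadratic_module P -> ext P x x.
Proof. move=> HP; exists 0, 1; split; [exact: (qm0 HP)|split; [exact: sos1|by rewrite add0r mul1r]]. Qed.

Variable Q : A -> Prop.
Hypothesis HQ : quadratic_module Q.
Variable y : A.
Hypothesis hno : ~ (exists t g, [/\ sos t, Q g & t * y = 1 + g]).

Let P0 := ext Q (- y).

Let good (X : A -> Prop) := [/\ quadratic_module X, (forall z, P0 z -> X z) & ~ X (-1)].

Let goodP0 : good P0.
Proof.
split; [exact: ext_qm | by [] |].
move=> [q [t [hq [ht e]]]]; apply: hno; exists t, q; split => //.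
have eq : q = -1 - t * - y by rewrite e; ring.
by rewrite eq; ring.
Qed.

Lemma exists_ordering : exists P : A -> Prop,
  [/\ quadratic_module P, (forall z, Q z -> P z), P (- y), ~ P (-1)
    & forall x, P x \/ P (- x)].
Proof.
pose Fam := fun X : set A => X = set0 \/ good X.
have chainP : forall F : set (set A), (F `<=` Fam)%classic -> total_on F subset ->
    Fam (\bigcup_(X in F) X)%classic.
  move=> F FF Ftot.
  have ne_good : forall X, F X -> forall z, X z -> good X.
    move=> X FX z Xz; case: (FF X FX) => // X0; by rewrite X0 in Xz.
  case: (pselect (exists X, F X /\ good X)) => [[X0 [FX0 gX0]]|hn]; last first.
    left; apply/seteqP; split => z //= [X FX Xz].
    by apply: hn; exists X; split => //; apply: (ne_good X FX z).
  right; case: gX0 => qX0 sX0 nX0; split.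
  - split.
    + by exists X0 => //; exact: (qm1 qX0).
    + move=> z1 z2 [X1 FX1 h1] [X2 FX2 h2].
      case: (Ftot X1 X2 FX1 FX2) => sub.
        exists X2 => //; case: (ne_good X2 FX2 z2 h2) => q2 _ _.
        by apply: (qmD q2) => //; apply: sub.
      exists X1 => //; case: (ne_good X1 FX1 z1 h1) => q1 _ _.
      by apply: (qmD q1) => //; apply: sub.
    + move=> s z hs [X FX h]; exists X => //.
      by case: (ne_good X FX z h) => q _ _; apply: (qmM q).
  - by move=> z hz; exists X0 => //; apply: sX0.
  - by move=> [X FX h]; case: (ne_good X FX _ h) => _ _; apply.
have [P [FP Pmax]] := Zorn_bigcup chainP.
have gP : good P.
  case: FP => // P0e; exfalso; apply: (Pmax P0); last by right; exact: goodP0.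
  rewrite P0e; split => // sub.
  have : P0 1 by case: goodP0 => q _ _; exact: (qm1 q).
  by move/sub.
case: gP => qP sP nP.
have maxP : forall B, good B -> (forall z, P z -> B z) -> forall z, B z -> P z.
  move=> B gB PB z Bz; apply: contrapT => nPz.
  apply: (Pmax B); last by right.
  by split => // BP; apply: nPz; apply: BP.
have extbad : forall x, ~ P x -> ext P x (-1).
  move=> x nx; apply: contrapT => n1; apply: nx.
  apply: (maxP (ext P x)); last exact: ext_x.
    split; [exact: ext_qm | | by []].
    by move=> z /sP; apply: ext_sub.
  exact: ext_sub.
exists P; split => //.
- by move=> z hz; apply: sP; apply: ext_sub.
- apply: sP; exists 0, 1; split; [exact: (qm0 HQ)|split; [exact: sos1|by rewrite add0r mul1r]].
move=> x; case: (pselect (P x)) => [|nx]; first by left.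
case: (pselect (P (- x))) => [|nnx]; first by right.
exfalso; apply: nP.
have [p1 [s1 [hp1 [hs1 e1]]]] := extbad x nx.
have [p2 [s2 [hp2 [hs2 e2]]]] := extbad (- x) nnx.
have ep1 : p1 = -1 - s1 * x by rewrite e1; ring.
have ep2 : p2 = -1 + s2 * x by rewrite e2; ring.
have h12 : P (- (s1 + s2)).
  have -> : - (s1 + s2) = s2 * p1 + s1 * p2 by rewrite ep1 ep2; ring.
  by apply: (qmD qP); apply: (qmM qP).
have hs1n : P (- s1).
  have -> : - s1 = - (s1 + s2) + s2 by ring.
  by apply: (qmD qP) => //; apply: (qm_sos qP).
have hsx : P (s1 * x).
  apply: (qm_unscale_nat qP (n := 3)).
  have -> : 4%:R * (s1 * x) = (x + 1) ^+ 2 * s1 + (x - 1) ^+ 2 * (- s1) by ring.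
  apply: (qmD qP); apply: (qmM qP);
    [exact: sos_sq | exact: (qm_sos qP hs1) | exact: sos_sq | exact: hs1n].
by rewrite e1; apply: (qmD qP).
Qed.

End Ord.
Section JacobiAPS.
Variables (R : realType) (A : comAlgType R).
Variable Q : A -> Prop.
Hypotheses (HQ : quadratic_module Q) (Qarch : forall x : A, exists N : R, Q (N%:A - x)).

Lemma geo (u : A) n : (1 - u) * \sum_(i < n) u ^+ i = 1 - u ^+ n.
Proof.
elim: n => [|n IH]; first by rewrite big_ord0 mulr0 expr0 subrr.
by rewrite big_ord_recr /= mulrDr IH exprS; ring.
Qed.

Lemma algD (a b : R) : (a + b)%:A = a%:A + b%:A :> A.
Proof. by rewrite scalerDl. Qed.
Lemma algB (a b : R) : (a - b)%:A = a%:A - b%:A :> A.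
Proof. by rewrite scalerBl. Qed.
Lemma algM' (a b : R) : (a * b)%:A = a%:A * b%:A :> A.
Proof. by rewrite mulr_algl scalerA. Qed.
Lemma alg1 : (1 : R)%:A = 1 :> A.
Proof. by rewrite scale1r. Qed.

Lemma Q_bound_pos x : exists N : R, 1 <= N /\ Q (N%:A - x).
Proof.
have [N hN] := Qarch x; exists (Num.max N 1); split; first by rewrite le_max lexx orbT.
have -> : (Num.max N 1)%:A - x = (N%:A - x) + (Num.max N 1 - N)%:A by rewrite algB; ring.
by apply: (qmD HQ) => //; apply: (qm_alg HQ); rewrite subr_ge0 le_max lexx.
Qed.

Lemma jacobi t g y : sos t -> Q g -> t * y = 1 + g ->
  forall eps : R, 0 < eps -> Q (y + eps%:A).
Proof.
move=> ht hg ety eps he.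
have [G [G1 hG]] := Q_bound_pos g.
have [L1 [L11 hL1]] := Q_bound_pos y.
have [L2 [L21 hL2]] := Q_bound_pos (- y).
pose L := Num.max L1 L2.
have L1L : L1 <= L by rewrite le_max lexx.
have L2L : L2 <= L by rewrite le_max lexx orbT.
have Lp : 0 < L by lra.
have hLm : Q (L%:A - y).
  have -> : L%:A - y = (L1%:A - y) + (L - L1)%:A by rewrite algB; ring.
  by apply: (qmD HQ) => //; apply: (qm_alg HQ); lra.
have hLp : Q (L%:A + y).
  have -> : L%:A + y = (L2%:A - - y) + (L - L2)%:A by rewrite algB; ring.
  by apply: (qmD HQ) => //; apply: (qm_alg HQ); lra.
have hLL : Q ((L * L)%:A - y ^+ 2).
  have -> : (L * L)%:A - y ^+ 2 = (L%:A - y) * (L%:A + y) by rewrite algM'; ring.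
  by apply: (qm_prod HQ (k := L + L)) => //; [lra | rewrite algD; ring].
pose c := (1 + G)^-1.
have cp : 0 < c by rewrite invr_gt0; lra.
have hc1 : c * (1 + G) = 1 by rewrite mulVf //; apply: lt0r_neq0; lra.
have c12 : c <= 2%:R^-1.
  by rewrite /c lef_pV2 ?posrE; lra.
pose b := 1 - c.
have bdef : b = 1 - c by [].
clearbody b.
have bp : 0 < b by rewrite bdef; lra.
have b1 : b < 1 by rewrite bdef; lra.
pose u := 1 - c%:A * (1 + g).
have udef : u = 1 - c%:A * (1 + g) by [].
clearbody u.
have hu : Q u.
  have -> : u = c%:A * (G%:A - g).
    apply/eqP; rewrite -subr_eq0; apply/eqP.
    have -> : u - c%:A * (G%:A - g) = 1 - (c * (1 + G))%:A by rewrite udef algM' algD alg1; ring.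
    by rewrite hc1 alg1 subrr.
  by apply: (qmM HQ) => //; apply: sos_alg; lra.
have hbu : Q (b%:A - u).
  have -> : b%:A - u = c%:A * g by rewrite udef bdef algB alg1; ring.
  by apply: (qmM HQ) => //; apply: sos_alg; lra.
have hbu2 : Q ((b * b)%:A - u ^+ 2).
  have -> : (b * b)%:A - u ^+ 2 = (b%:A - u) * (b%:A + u) by rewrite algM'; ring.
  apply: (qm_prod HQ (k := b + b)) => //; first lra.
    by apply: (qmD HQ) => //; apply: (qm_alg HQ); lra.
  by rewrite algD; ring.
have hpow : forall n, Q (((b * b) ^+ n)%:A - (u ^+ n) ^+ 2).
  elim=> [|n IH]; first by rewrite !expr0 alg1 expr1n subrr; exact: (qm0 HQ).
  have -> : ((b * b) ^+ n.+1)%:A - (u ^+ n.+1) ^+ 2 =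
    (b * b)%:A * (((b * b) ^+ n)%:A - (u ^+ n) ^+ 2) + (u ^+ n) ^+ 2 * ((b * b)%:A - u ^+ 2).
    by rewrite [(b * b) ^+ n.+1]exprS [u ^+ n.+1]exprS algM'; ring.
  apply: (qmD HQ); apply: (qmM HQ) => //; last exact: sos_sq.
  by apply: sos_alg; rewrite mulr_ge0 //; lra.
pose lam := eps / (L * L).
have LLp : 0 < L * L by rewrite mulr_gt0.
have lamp : 0 < lam by rewrite divr_gt0.
have hlam : lam * (L * L) = eps by rewrite /lam divfK // lt0r_neq0.
have bb0 : 0 <= b * b by rewrite mulr_ge0 //; lra.
have bb1 : b * b < 1.
  have : b * b <= b * 1 by rewrite ler_pM2l //; lra.
  lra.
have [n hn] := pow_small bb0 bb1 (mulr_gt0 he lamp).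
pose w := u ^+ n.
have T1 : Q (t * y ^+ 2 * (c%:A * \sum_(i < n) u ^+ i)).
  apply: (qmM HQ); first by apply: sosM => //; exact: sos_sq.
  apply: (qmM HQ); first by apply: sos_alg; lra.
  by apply: (qm_sum HQ) => i; apply: (qm_pow HQ).
have T2 : Q (y * w + eps%:A).
  apply: (qm_unscale HQ (k := lam + lam)); first lra.
  have -> : (lam + lam) *: (y * w + eps%:A) =
     (lam%:A * y + w) ^+ 2 + (lam * lam)%:A * ((L * L)%:A - y ^+ 2)
     + (((b * b) ^+ n)%:A - w ^+ 2)
     + ((lam * eps + lam * eps - lam * lam * (L * L) - (b * b) ^+ n)%:A).
    by rewrite -[(lam + lam) *: _]mulr_algl !algB !algD !algM'; ring.
  apply: (qmD HQ); last first.
    apply: (qm_alg HQ).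
    have -> : lam * lam * (L * L) = lam * eps by rewrite -mulrA hlam.
    lra.
  apply: (qmD HQ); last exact: hpow.
  apply: (qmD HQ); first by apply: (qm_sos HQ); exact: sos_sq.
  apply: (qmM HQ) => //; apply: sos_alg; rewrite mulr_ge0 //; lra.
have -> : y + eps%:A = t * y ^+ 2 * (c%:A * \sum_(i < n) u ^+ i) + (y * w + eps%:A).
  have e2 : t * y ^+ 2 = y * (1 + g) by rewrite -ety; ring.
  have e3 : c%:A * (1 + g) = 1 - u by rewrite udef; ring.
  rewrite e2 mulrA -(mulrA y) (mulrC (1 + g)) e3 -mulrA geo /w; ring.
exact: (qmD HQ).
Qed.

Lemma APS (a0 : A) (delta : R) : 0 < delta ->
  (forall f : A -> R, alg_hom f -> (forall z, Q z -> 0 <= f z) -> 0 <= f a0) ->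
  Q (a0 + delta%:A).
Proof.
move=> hd hpos; apply: contrapT => nb.
pose y := a0 + (delta / 2%:R)%:A.
case: (pselect (exists t g, [/\ sos t, Q g & t * y = 1 + g])) => [[t [g [ht hg e]]]|hno].
  apply: nb; have := jacobi ht hg e (eps := delta / 2%:R).
  rewrite /y -addrA -algD.
  have -> : delta / 2%:R + delta / 2%:R = delta by lra.
  by apply; lra.
have [P [qP sP Py nP tP]] := exists_ordering HQ hno.
have aP : forall x, exists N : R, P (N%:A - x).
  by move=> x; have [N hN] := Qarch x; exists N; apply: sP.
have hom := chi_hom qP tP nP aP.
have := hpos _ hom (fun z hz => chi_ge0 qP tP nP aP (sP z hz)).
have := chi_ge0 qP tP nP aP Py.
case: hom => hD _ _ hZ.
have hN : chi P (- y) = - chi P y.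
  by rewrite -scaleN1r hZ mulN1r.
rewrite hN /y hD -[(delta / 2%:R)%:A]mulr1 mulr_algl hZ.
have -> : chi P 1 = 1 by case: (chi_hom qP tP nP aP).
lra.
Qed.

End JacobiAPS.
Section Poly.
Variables (R : realType) (A : comAlgType R).

Lemma peval_sum (p : {poly R}) (v : A) :
  peval p v = \sum_(i < size p) p`_i *: v ^+ i.
Proof.
rewrite /peval -{1}[p]coefK poly_def rmorph_sum; apply: eq_bigr => i _.
by rewrite -mul_polyC rmorphM /= horner_algC rmorphXn /= horner_algX mulr_algl.
Qed.

Lemma sos_sum n (F : 'I_n -> A) : (forall i, sos (F i)) -> sos (\sum_(i < n) F i).
Proof. by move=> h; apply: big_ind => //; [exact: sos0 | exact: sosD]. Qed.

Lemma sos_peval (p : {poly R}) (v : A) : nonneg_poly p -> sos v -> sos (peval p v).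
Proof.
move=> hp hv; rewrite peval_sum; apply: sos_sum => i.
by apply: sos_scale; [exact: hp | exact: sosX].
Qed.

Lemma horner_ge0 (p : {poly R}) (c : R) : nonneg_poly p -> 0 <= c -> 0 <= p.[c].
Proof.
move=> hp hc; rewrite horner_coef; apply: sumr_ge0 => i _.
by rewrite mulr_ge0 ?exprn_ge0.
Qed.

Lemma hom_facts (f : A -> R) : alg_hom f ->
  [/\ f 0 = 0, forall x n, f (x ^+ n) = f x ^+ n, forall c, f c%:A = c
    & forall n (F : 'I_n -> A), f (\sum_(i < n) F i) = \sum_(i < n) f (F i)].
Proof.
case=> hD hM h1 hZ.
have f0 : f 0 = 0 by have := hD 0 0; rewrite addr0 => h; lra.
split => //.
- by move=> x; elim=> [|n IH]; rewrite ?expr0 // !exprS hM IH.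
- by move=> c; rewrite hZ h1 mulr1.
- by move=> n F; apply: (big_morph f hD f0).
Qed.

Lemma f_peval (f : A -> R) (p : {poly R}) (v : A) : alg_hom f -> f (peval p v) = p.[f v].
Proof.
move=> hf; have [f0 fX fc fS] := hom_facts hf; case: hf => hD hM h1 hZ.
by rewrite peval_sum fS horner_coef; apply: eq_bigr => i _; rewrite hZ fX.
Qed.

Lemma f_sos_ge0 (f : A -> R) (x : A) : alg_hom f -> sos x -> 0 <= f x.
Proof.
move=> hf [s ->]; have [f0 fX fc fS] := hom_facts hf; case: hf => hD hM h1 hZ.
rewrite (big_morph f hD f0); apply: sumr_ge0 => i _; rewrite fX; exact: sqr_ge0.
Qed.

Lemma Q_peval_bound (Q : A -> Prop) (p : {poly R}) (v : A) (c : R) :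
  quadratic_module Q -> nonneg_poly p -> sos v -> 0 <= c -> Q (c%:A - v) ->
  Q (p.[c]%:A - peval p v).
Proof.
move=> HQ hp hv hc hcv.
have hi : forall i, Q ((c ^+ i)%:A - v ^+ i).
  elim=> [|i IH]; first by rewrite !expr0 scale1r subrr; exact: (qm0 HQ).
  have -> : (c ^+ i.+1)%:A - v ^+ i.+1 = c%:A * ((c ^+ i)%:A - v ^+ i) + v ^+ i * (c%:A - v).
    by rewrite [c ^+ i.+1]exprS [v ^+ i.+1]exprS algM'; ring.
  by apply: (qmD HQ); apply: (qmM HQ) => //; [exact: sos_alg | exact: sosX].
rewrite peval_sum horner_coef scaler_suml -sumrB; apply: (qm_sum HQ) => i.
rewrite -scalerA -scalerBr; apply: (qm_scale HQ) => //; exact: hp.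
Qed.

Lemma sos_unscale_nat n (x : A) : sos (n.+1%:R * x) -> sos x.
Proof.
move=> h; have -> : x = (n.+1%:R : R)^-1 *: (n.+1%:R * x).
  by rewrite mulr_natl -scaler_nat scalerA mulVf ?pnatr_eq0 // scale1r.
by apply: sos_scale => //; rewrite invr_ge0.
Qed.

Lemma sos_2pow j (x : A) : sos (1 + x ^+ (2 ^ j) - x).
Proof.
elim: j x => [|j IH] x; first by rewrite expn0 expr1 addrK; exact: sos1.
apply: (sos_unscale_nat (n := 1)).
have e1 : x ^+ (2 ^ j.+1) = (x ^+ (2 ^ j)) ^+ 2 by rewrite expnSr exprM.
have e2 : x ^+ (2 ^ j.+1) = (x ^+ 2) ^+ (2 ^ j) by rewrite expnSr mulnC exprM.
have -> : 2%:R * (1 + x ^+ (2 ^ j.+1) - x) =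
   (1 + (x ^+ 2) ^+ (2 ^ j) - x ^+ 2) + (x - 1) ^+ 2 + (x ^+ (2 ^ j)) ^+ 2.
  by rewrite -e2 -e1; ring.
by apply: sosD; [apply: sosD; [exact: IH | exact: sos_sq] | exact: sos_sq].
Qed.

End Poly.
Unset Implicit Arguments.
Set Strict Implicit.

Theorem theorem4p5 (R : realType) (A : comAlgType R) (M : A -> Prop) (v : A) :
  quadratic_module M ->
  sos v ->
  (forall a : A, sos a -> exists p : {poly R}, nonneg_poly p /\ M (peval p v - a)) ->
  forall a : A,
    (forall f : A -> R, alg_hom f -> (forall m, M m -> 0 <= f m) -> 0 <= f a)
    <->
    (forall r eps : R, 0 <= r -> 0 < eps ->
       exists (q : {poly R}) (w : A),
         [/\ nonneg_poly q, sos w, q.[r] <= eps & M ((1 + w) * (a + peval q v))]).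
Proof.
move=> hM hv hdom a; split; last first.
  move=> H2 f hf hfM; rewrite leNgt; apply/negP => ha.
  have hr : 0 <= f v by apply: f_sos_ge0.
  have he : 0 < - f a / 2%:R by lra.
  have [q [w [hq hw hqr hMw]]] := H2 _ _ hr he.
  have := hfM _ hMw.
  have hw0 := f_sos_ge0 hf hw.
  have fp := f_peval q v hf.
  case: hf => hD hMl h1 hZ.
  rewrite hMl !hD h1 fp => h.
  have : 0 <= f a + q.[f v].
    by move: h; rewrite pmulr_rge0 //; lra.
  lra.
move=> H1 r eps hr he.
pose c := r + 1.
have cp : 0 < c by rewrite /c; lra.
pose Q := ext M (c%:A - v).
have HQ : quadratic_module Q by apply: ext_qm.
have MQ : forall z, M z -> Q z by apply: ext_sub.
have Qcv : Q (c%:A - v).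
  by exists 0, 1; split; [exact: (qm0 hM) | split; [exact: sos1 | rewrite add0r mul1r]].
have Qarch : forall x : A, exists N : R, Q (N%:A - x).
  move=> x; have [p [hp hpx]] := hdom (x ^+ 2) (sos_sq x).
  have pc0 : 0 <= p.[c] := horner_ge0 hp (ltW cp).
  exists (1 + p.[c]); apply: (qm_unscale_nat HQ (n := 1)).
  have -> : 2%:R * ((1 + p.[c])%:A - x) =
     (x - 1) ^+ 2 + (p.[c]%:A - peval p v) + (peval p v - x ^+ 2) + (1 + p.[c])%:A.
    by rewrite algD scale1r; ring.
  apply: (qmD HQ); last by apply: (qm_alg HQ); lra.
  apply: (qmD HQ); last by apply: MQ.
  apply: (qmD HQ); first by apply: (qm_sos HQ); exact: sos_sq.
  by apply: (Q_peval_bound HQ hp hv (ltW cp) Qcv).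
have he2 : 0 < eps / 2%:R by lra.
have hAPS := APS HQ Qarch he2 (fun f hf hfQ => H1 f hf (fun m hm => hfQ m (MQ m hm))).
have [m [s [hm [hs e]]]] := hAPS.
have [p [hp hpv]] := hdom (s * v) (sosM hs hv).
pose pr := p.[r].
have pr0 : 0 <= pr := horner_ge0 hp hr.
pose bt := r / c.
have bt0 : 0 <= bt by rewrite /bt divr_ge0 // ltW.
have bt1 : bt < 1 by rewrite /bt ltr_pdivrMr // mul1r /c; lra.
pose ka := (eps / 2%:R) / (1 + pr).
have ka0 : 0 < ka by rewrite /ka divr_gt0 //; lra.
have [k hk] := pow_small bt0 bt1 ka0.
pose K1 := (2 ^ k).-1.
have hK : (2 ^ k)%N = K1.+1 by rewrite /K1 prednK // expn_gt0.
have kK : (k <= K1)%N by rewrite -ltnS -hK ltn_expl.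
pose q := (eps / 2%:R)%:P + (c^-1 ^+ K1) *: (p * 'X^K1).
exists q, 0; split.
- move=> i; rewrite coefD coefC coefZ coefMXn.
  apply: addr_ge0; first by case: (i == 0%N) => //; lra.
  apply: mulr_ge0; first by rewrite exprn_ge0 // invr_ge0 ltW.
  by case: ifP => // _; exact: hp.
- exact: sos0.
- rewrite hornerD hornerC hornerZ hornerM hornerXn -/pr.
  have : bt ^+ K1 <= bt ^+ k by apply: ler_wiXn2l => //; exact: ltW.
  have ebt : c^-1 ^+ K1 * (pr * r ^+ K1) = bt ^+ K1 * pr.
    by rewrite /bt exprMn; ring.
  rewrite ebt => hb.
  have : bt ^+ K1 * pr <= ka * pr by rewrite ler_wpM2r //; exact: le_trans hb hk.
  have : ka * pr <= eps / 2%:R.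
    rewrite /ka mulrAC ler_pdivrMr; last lra.
    by rewrite ler_pM2l //; lra.
  lra.
- rewrite addr0 mul1r.
  pose z := c^-1 *: v.
  have vz : v = c%:A * z by rewrite /z mulr_algl scalerA mulfV ?scale1r // lt0r_neq0.
  have ez : peval q v = (eps / 2%:R)%:A + z ^+ K1 * peval p v.
    rewrite /peval rmorphD /= horner_algC; congr (_ + _).
    rewrite -mul_polyC rmorphM /= horner_algC rmorphM /= rmorphXn /= horner_algX.
    by rewrite /z exprZn -[c^-1 ^+ K1 *: v ^+ K1]mulr_algl; ring.
  have -> : a + peval q v = m + z ^+ K1 * (peval p v - s * v) + c%:A * (s * (1 + z ^+ (2 ^ k) - z)).
    rewrite ez addrA e hK exprS vz; ring.
  apply: (qmD hM); last first.
    apply: (qm_sos hM); apply: sosM; first by apply: sos_alg; exact: ltW.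
    by apply: sosM => //; exact: sos_2pow.
  apply: (qmD hM) => //; apply: (qmM hM) => //; apply: sosX.
  by apply: sos_scale => //; rewrite invr_ge0 ltW.
Qed.
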